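(* Let $u\in\mathcal F$ be a feasible flow. Then $u$ is implementable (i.e., there exists $\lambda\in\mathbb{R}^J_{\geq 0}$ with $u\in\mathrm{WE}(\lambda)$) if and only if $u$ is an optimal solution of the linear program \[ \min_{x\in\mathcal F}\ \sum_{(i,p)\in\mathcal P}\tau_{i,p}(u)\, x_{i,p}\quad\text{s.t.}\quad \sum_{(i,p)\in\mathcal P} g_{i,p,j}(u)\, x_{i,p}\le G_j(u)\ \text{ for all } j\in J. \]
   Context: Let $G=(V,E)$ be a directed graph and $I$ a finite set of commodities; commodity $i$ has source $s_i$, sink $t_i$ and demand $d_i>0$. $\mathcal P_i$ is the set of simple $s_i$–$t_i$ paths and $\mathcal P=\{(i,p): i\in I, p\in\mathcal P_i\}$. A flow is $x\in\mathbb{R}^{\mathcal P}_{\ge 0}$; it is feasible if $\sum_{p\in\mathcal P_i}x_{i,p}=d_i$ for all $i$; $\mathcal F$ is the set of feasible flows. $J$ is a finite set of externality classes with externality functions $g_{i,p,j}:\mathcal F\to\mathbb{R}_{\ge 0}$, and $G_j(x)=\sum_{(i,p)\in\mathcal P}g_{i,p,j}(x)\,x_{i,p}$. Travel time functions $\tau_{i,p}:\mathcal F\to\mathbb{R}$ are arbitrary. For $\lambda\in\mathbb{R}^J_{\ge0}$ the cost is $c^\lambda_{i,p}(x)=\tau_{i,p}(x)+\sum_{j\in J}\lambda_j g_{i,p,j}(x)$. A feasible flow $x$ is a Wardrop equilibrium w.r.t. $c^\lambda$ if for all $i\in I$, $p\in\mathcal P_i$: $x_{i,p}>0$ implies $c^\lambda_{i,p}(x)\le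 c^\lambda_{i,q}(x)$ for all $q\in\mathcal P_i$. $\mathrm{WE}(\lambda)$ denotes the set of such equilibria. *)

(* Defs.v *)
From HB Require Import structures.
From mathcomp Require Import all_boot all_order all_algebra.
From mathcomp Require Import reals.
Set Implicit Arguments. Unset Strict Implicit. Unset Printing Implicit Defensive.
Import Order.TTheory GRing.Theory Num.Theory.
Local Open Scope ring_scope.

(* A simple s-t path is represented by its (nonempty, duplicate-free) vertex
   sequence [:: s; ...; t] whose consecutive vertices are joined by edges. *)
Definition is_simple_path (V : finType) (E : rel V) (s t : V) (p : seq V) : bool :=
  match p with
  | [::] => false
  | x :: q => [&& x == s, last x q == t, path E x q & uniq p]
  end.

(* all vertex sequences of length at most #|V| (every simple path is among them) *)
Definition short_seqs (V : finType) : seq (seq V) :=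
  flatten [seq [seq tval w | w : k.-tuple V] | k <- iota 0 #|V|.+1].

Definition simple_paths (V : finType) (E : rel V) (s t : V) : seq (seq V) :=
  [seq p <- short_seqs V | is_simple_path E s t p].

Definition path_list (V I : finType) (E : rel V) (s t : I -> V) : seq (I * seq V) :=
  flatten [seq [seq (i, p) | p <- simple_paths E (s i) (t i)] | i <- enum I].

Definition Pidx (V I : finType) (E : rel V) (s t : I -> V) : finType :=
  seq_sub (path_list E s t).

Definition comm (V I : finType) (E : rel V) (s t : I -> V) (a : Pidx E s t) : I :=
  (ssval a).1.

Section Flows.
Variables (R : realType) (V I J : finType) (E : rel V) (s t : I -> V) (d : I -> R).
Local Notation P := (Pidx E s t).

Definition feasible (x : P -> R) : Prop :=
  (forall a, 0 <= x a) /\ (forall i : I, \sum_(a : P | comm a == i) x a = d i).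

Variables (tau : (P -> R) -> P -> R) (g : (P -> R) -> P -> J -> R).

Definition Gext (x : P -> R) (j : J) : R := \sum_(a : P) g x a j * x a.

Definition cost (lam : J -> R) (x : P -> R) (a : P) : R :=
  tau x a + \sum_(j : J) lam j * g x a j.

Definition wardrop (lam : J -> R) (x : P -> R) : Prop :=
  feasible x /\
  forall a b : P, comm a = comm b -> 0 < x a -> cost lam x a <= cost lam x b.

Definition implementable (u : P -> R) : Prop :=
  exists lam : J -> R, (forall j, 0 <= lam j) /\ wardrop lam u.

Definition LP_feasible (u x : P -> R) : Prop :=
  feasible x /\ forall j : J, \sum_(a : P) g u a j * x a <= Gext u j.

Definition LP_objective (u x : P -> R) : R := \sum_(a : P) tau u a * x a.

Definition LP_optimal (u : P -> R) : Prop :=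
  LP_feasible u u /\ forall x, LP_feasible u x -> LP_objective u u <= LP_objective u x.

End Flows.

(* Main.v *)
Require Import Defs.
From HB Require Import structures.
From mathcomp Require Import all_boot all_order all_algebra.
From mathcomp Require Import reals lra.
From Stdlib Require List Classical.
Import Order.TTheory GRing.Theory Num.Theory.
Local Open Scope ring_scope.

Section FM.
Variable R : realType.
Definition row := ((nat -> R) * R)%type.
Definition lhs n (r : row) (lam : nat -> R) := \sum_(j < n) r.1 j * lam j.

Definition comb (c1 c2 : R) (r1 r2 : row) : row :=
  (fun j => c1 * r1.1 j + c2 * r2.1 j, c1 * r1.2 + c2 * r2.2).

Inductive deriv (rs : list row) : row -> Prop :=
| dIn r : List.In r rs -> deriv rs r
| dComb c1 c2 r1 r2 : 0 <= c1 -> 0 <= c2 -> deriv rs r1 -> deriv rs r2 ->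
    deriv rs (comb c1 c2 r1 r2).

Lemma deriv_trans rs rs' r : (forall r', List.In r' rs' -> deriv rs r') ->
  deriv rs' r -> deriv rs r.
Proof. move=> H; elim=> {r} [r Hr|c1 c2 r1 r2 h1 h2 _ H1 _ H2]; [exact: H|exact: dComb]. Qed.

Lemma deriv_zero rs k r : (forall r', List.In r' rs -> r'.1 k = 0) ->
  deriv rs r -> r.1 k = 0.
Proof. move=> H; elim=> {r} [r Hr|c1 c2 r1 r2 h1 h2 _ H1 _ H2]; first exact: H.
by rewrite /comb /= H1 H2 !mulr0 addr0. Qed.

Lemma lhs_comb n c1 c2 r1 r2 lam :
  lhs n (comb c1 c2 r1 r2) lam = c1 * lhs n r1 lam + c2 * lhs n r2 lam.
Proof.
rewrite /lhs /comb /= !mulr_sumr -big_split /=; apply: eq_bigr => j _.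
by rewrite mulrDl !mulrA.
Qed.

Lemma lbex (s : list R) : exists v, forall u, List.In u s -> v <= u.
Proof.
elim: s => [|a s [v Hv]]; first by exists 0.
have [h|h] := lerP a v.
- exists a => u /= [<-|/Hv]; lra.
- exists v => u /= [<-|/Hv]; lra.
Qed.

Lemma maxex (a : R) (s : list R) : exists v, List.In v (a :: s) /\
  forall l, List.In l (a :: s) -> l <= v.
Proof.
elim: s a => [|b s IH] a; first by exists a; split; [left|move=> l [<-|[]]].
have [v [Hv1 Hv2]] := IH b.
have [h|h] := lerP a v.
- exists v; split; first by right.
  move=> l [<-|/Hv2] //.
- exists a; split; first by left.
  move=> l [<-|/Hv2]; lra.
Qed.

Lemma sep (Ls Us : list R) : (forall l u, List.In l Ls -> List.In u Us -> l <= u) ->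
  exists v, (forall l, List.In l Ls -> l <= v) /\ (forall u, List.In u Us -> v <= u).
Proof.
case: Ls => [|a Ls] H.
  by have [v Hv] := lbex Us; exists v; split.
have [v [Hv1 Hv2]] := maxex a Ls.
by exists v; split=> // u Hu; apply: H.
Qed.

Lemma FM n : forall rs : list row,
  (forall lam, exists2 r, List.In r rs & r.2 < lhs n r lam) ->
  exists r, deriv rs r /\ (forall j, (j < n)%N -> r.1 j = 0) /\ r.2 < 0.
Proof.
elim: n => [|n IH] rs H.
  have [r Hr Hlt] := H (fun _ => 0).
  exists r; split; first exact: dIn.
  by split=> //; move: Hlt; rewrite /lhs big_ord0.
pose Z := List.filter (fun r : row => r.1 n == 0) rs.
pose Pp := List.filter (fun r : row => 0 < r.1 n) rs.
pose Nn := List.filter (fun r : row => r.1 n < 0) rs.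
pose nw := (Z ++ List.flat_map (fun p => List.map (fun q : row => comb (- q.1 n) (p.1 n) p q) Nn) Pp)%list.
have Hnw : forall r, List.In r nw -> deriv rs r /\ r.1 n = 0.
  move=> r /List.in_app_iff [/List.filter_In [h1 /eqP h2]|]; first by split=> //; exact: dIn.
  move=> /List.in_flat_map [p [/List.filter_In [hp1 hp2] /List.in_map_iff [q [<- /List.filter_In [hq1 hq2]]]]].
  split; last by rewrite /comb /=; lra.
  apply: dComb; [lra|lra|exact: dIn|exact: dIn].
have [r [Hr1 [Hr2 Hr3]]] : exists r, deriv nw r /\ (forall j, (j < n)%N -> r.1 j = 0) /\ r.2 < 0.
  apply: IH => lam; apply: Classical_Prop.NNPP => Hno.
  have H' : forall r, List.In r nw -> lhs n r lam <= r.2.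
    move=> r Hr; rewrite leNgt; apply/negP => Hlt; apply: Hno; by exists r.
  pose L := fun q : row => (q.2 - lhs n q lam) / q.1 n.
  have Hs : forall l u, List.In l (List.map L Nn) -> List.In u (List.map L Pp) -> l <= u.
    move=> l u /List.in_map_iff [q [<- /List.filter_In [hq1 hq2]]].
    move=> /List.in_map_iff [p [<- /List.filter_In [hp1 hp2]]].
    have hc : lhs n (comb (- q.1 n) (p.1 n) p q) lam <= (comb (- q.1 n) (p.1 n) p q).2.
      apply: H'; apply/List.in_app_iff; right; apply/List.in_flat_map; exists p.
      split; first by apply/List.filter_In.
      by apply/List.in_map_iff; exists q; split=> //; apply/List.filter_In.
    rewrite lhs_comb /= in hc.
    have eq1 : L q * q.1 n = q.2 - lhs n q lam by rewrite /L divfK // ltr0_neq0.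
    have eq2 : L p * p.1 n = p.2 - lhs n p lam by rewrite /L divfK // gt_eqF.
    move: hq2 hp2 => hq2 hp2.
    rewrite leNgt; apply/negP => hlt.
    have h1 : p.1 n * q.1 n < 0 by rewrite pmulr_rlt0.
    nra.
  have [v [Hv1 Hv2]] := sep _ _ Hs.
  have [r Hr Hlt] := H (fun j => if j == n then v else lam j).
  have Hl : lhs n.+1 r (fun j => if j == n then v else lam j) = lhs n r lam + r.1 n * v.
    rewrite /lhs big_ord_recr /= eqxx; congr (_ + _).
    by apply: eq_bigr => j _; rewrite ltn_eqF.
  rewrite Hl in Hlt.
  have eqL : r.1 n != 0 -> L r * r.1 n = r.2 - lhs n r lam by move=> h; rewrite /L divfK.
  have [h|h|h] := ltgtP (r.1 n) 0.
  - have hv : L r <= v by apply: Hv1; apply/List.in_map_iff; exists r; split=> //; apply/List.filter_In.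
    have := eqL (ltr0_neq0 h); nra.
  - have hv : v <= L r by apply: Hv2; apply/List.in_map_iff; exists r; split=> //; apply/List.filter_In.
    have := eqL (lt0r_neq0 h); nra.
  - rewrite h mul0r addr0 in Hlt.
    have : lhs n r lam <= r.2.
      by apply: H'; apply/List.in_app_iff; left; apply/List.filter_In; rewrite h eqxx.
    lra.
exists r; split; first by apply: (deriv_trans _ _ _ _ Hr1) => r' /Hnw [].
split=> // j; rewrite ltnS leq_eqVlt => /orP [/eqP ->|]; last exact: Hr2.
by apply: (deriv_zero _ _ _ _ Hr1) => r' /Hnw [].
Qed.
End FM.
Arguments lhs {R}.
Arguments comb {R}.
Arguments deriv {R}.
Arguments FM {R}.

Section Main.
Variables (R : realType) (V I J : finType) (E : rel V) (s t : I -> V) (d : I -> R).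
Local Notation P := (Pidx E s t).
Variables (tau : (P -> R) -> P -> R) (g : (P -> R) -> P -> J -> R).

Lemma costsum lam (u y : P -> R) :
  \sum_a cost tau g lam u a * y a =
  \sum_a tau u a * y a + \sum_j lam j * \sum_a g u a j * y a.
Proof.
rewrite /cost; under eq_bigr do rewrite mulrDl.
rewrite big_split /=; congr (_ + _).
under eq_bigr do rewrite mulr_suml.
rewrite exchange_big /=; apply: eq_bigr => j _; rewrite mulr_sumr.
by apply: eq_bigr => a _; rewrite mulrA.
Qed.

Lemma dir1 (hd : forall i, 0 < d i) u : implementable d tau g u -> LP_optimal d tau g u.
Proof.
move=> [lam [hlam [[hu0 hu1] hW]]].
split; first by split=> //; split.
move=> x [[hx0 hx1] hxG].
rewrite /LP_objective.
have Hc : \sum_a cost tau g lam u a * u a <= \sum_a cost tau g lam u a * x a.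
  rewrite (partition_big (fun a : P => comm a) predT) //=.
  rewrite [X in _ <= X](partition_big (fun a : P => comm a) predT) //=.
  apply: ler_sum => i _.
  rewrite -(ler_pM2l (hd i)).
  rewrite -{1}(hx1 i) -(hu1 i) !big_distrlr /=.
  rewrite [X in _ <= X]exchange_big /=.
  apply: ler_sum => b hb; apply: ler_sum => a ha.
  have [h|h] := ltrP 0 (u a).
    have := hW a b _ h; rewrite (eqP ha) (eqP hb) => /(_ erefl) hc.
    have hp : 0 <= u a * x b by apply: mulr_ge0 => //; apply: ltW.
    nra.
  have -> : u a = 0 by have := hu0 a; lra.
  by rewrite !(mulr0, mul0r).
rewrite !costsum in Hc.
have H2 : \sum_j lam j * \sum_a g u a j * x a <= \sum_j lam j * \sum_a g u a j * u a.
  apply: ler_sum => j _; apply: ler_wpM2l => //; exact: hxG.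
lra.
Qed.

Definition rowc (c : J -> R) : nat -> R :=
  fun k => \sum_(j | (enum_rank j : nat) == k) c j.

Lemma rowc_rank c j : rowc c (enum_rank j) = c j.
Proof.
rewrite /rowc (big_pred1 j) // => j' /=.
by rewrite (inj_eq val_inj) (inj_eq enum_rank_inj).
Qed.

Lemma lhs_rowc c x lam :
  lhs #|J| (rowc c, x) lam = \sum_j c j * lam (enum_rank j).
Proof.
rewrite /lhs (reindex enum_rank) /=; last exact: onW_bij (enum_rank_bij J).
by apply: eq_bigr => j _; rewrite rowc_rank.
Qed.

Lemma sum_delta (T : finType) (Q : pred T) (b : T) (F : T -> R) :
  \sum_(x | Q x) F x * (x == b)%:R = if Q b then F b else 0.
Proof.
rewrite big_mkcond (bigD1 b) //= eqxx mulr1 big1 ?addr0 // => x /negbTE ->.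
by case: (Q x); rewrite ?mulr0.
Qed.

Lemma sum_delta1 (T : finType) (Q : pred T) (b : T) :
  \sum_(x | Q x) ((x == b)%:R : R) = if Q b then 1 else 0.
Proof.
rewrite -(sum_delta _ Q b (fun _ => 1)); apply: eq_bigr => x _; by rewrite mul1r.
Qed.

Lemma sum_lin (T : finType) (Q : pred T) (F z1 z2 : T -> R) c1 c2 :
  \sum_(x | Q x) F x * (c1 * z1 x + c2 * z2 x) =
  c1 * \sum_(x | Q x) F x * z1 x + c2 * \sum_(x | Q x) F x * z2 x.
Proof.
rewrite !mulr_sumr -big_split /=; apply: eq_bigr => x _.
by rewrite mulrDr !mulrA ![F x * _]mulrC.
Qed.

Lemma sum_lin1 (T : finType) (Q : pred T) (z1 z2 : T -> R) c1 c2 :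
  \sum_(x | Q x) (c1 * z1 x + c2 * z2 x) =
  c1 * \sum_(x | Q x) z1 x + c2 * \sum_(x | Q x) z2 x.
Proof. by rewrite !mulr_sumr -big_split. Qed.

Lemma memIn (T : eqType) (x : T) (l : seq T) : x \in l -> List.In x l.
Proof. elim: l => //= y l IH; rewrite in_cons => /orP [/eqP ->|/IH]; auto. Qed.

Lemma eps_ex (u z : P -> R) (hu0 : forall a, 0 <= u a)
  (hz : forall a, u a <= 0 -> 0 <= z a) (l : seq P) :
  exists e, 0 < e /\ forall a, List.In a l -> forall e', 0 < e' <= e -> 0 <= u a + e' * z a.
Proof.
elim: l => [|a l [e [he H]]]; first by exists 1.
have [ea [hea Ha]] : exists ea, 0 < ea /\ forall e', 0 < e' <= ea -> 0 <= u a + e' * z a.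
  have [h|h] := lerP (u a) 0.
    exists 1; split=> // e' /andP [h1 h2]; have := hz a h; have := hu0 a; nra.
  exists (u a / (1 + `|z a|)); split; first by apply: divr_gt0 => //; apply: ltr_pwDl.
  move=> e' /andP [h1 h2].
  have hw : 0 <= `|z a| by [].
  have hz1 : - `|z a| <= z a by rewrite lerNl -normrN ler_norm.
  have heq : u a / (1 + `|z a|) * (1 + `|z a|) = u a by rewrite divfK // gt_eqF // ltr_pwDl.
  set w := `|z a| in hw hz1 heq; set ea := u a / (1 + w) in h2 heq.
  have p1 : 0 <= e' * (z a + w) by apply: mulr_ge0; lra.
  have p2 : 0 <= (ea - e') * w by apply: mulr_ge0; lra.
  nra.
have [h|h] := lerP ea e.
- exists ea; split=> // b /= [<-|hb] e' /andP [h1 h2]; first by apply: Ha; rewrite h1.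
  by apply: H => //; rewrite h1 /=; apply: le_trans h.
- exists e; split=> // b /= [<-|hb] e' /andP [h1 h2]; last by apply: H => //; rewrite h1.
  by apply: Ha; rewrite h1 /=; apply: le_trans (ltW h).
Qed.

Section Dir2.
Variable u : P -> R.
Hypothesis hu : feasible d u.

Definition rowab (a b : P) : row R :=
  (rowc (fun j => g u a j - g u b j), tau u b - tau u a).
Definition rowlam (j : J) : row R := (rowc (fun j' => - ((j' == j)%:R)), 0).

Definition rs : list (row R) :=
  (List.flat_map (fun a => List.map (fun b => rowab a b)
     (List.filter (fun b => comm a == comm b) (enum P)))
     (List.filter (fun a => 0 < u a) (enum P)) ++ List.map rowlam (enum J))%list.

Lemma inv r : deriv rs r -> exists z : P -> R,
  [/\ forall i, \sum_(a | comm a == i) z a = 0,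
      forall a, u a <= 0 -> 0 <= z a,
      forall j, \sum_a g u a j * z a <= - r.1 (enum_rank j) &
      \sum_a tau u a * z a <= r.2].
Proof.
elim=> {r} [r|c1 c2 r1 r2 h1 h2 _ [z1 [A1 B1 C1 D1]] _ [z2 [A2 B2 C2 D2]]].
  move=> /List.in_app_iff [|].
    move=> /List.in_flat_map [a [/List.filter_In [_ ha] /List.in_map_iff [b [<- /List.filter_In [_ hab]]]]].
    exists (fun x => (x == b)%:R - (x == a)%:R); split.
    - move=> i; rewrite sumrB !sum_delta1 (eqP hab); lra.
    - move=> x hx; have -> : (x == a) = false.
        by apply/negP => /eqP hxa; move: hx; rewrite hxa; lra.
      by case: (x == b); rewrite /=; lra.
    - move=> j; rewrite /rowab /= rowc_rank.
      under eq_bigr do rewrite mulrBr.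
      by rewrite sumrB !sum_delta //=; lra.
    - rewrite /rowab /=; under eq_bigr do rewrite mulrBr.
      by rewrite sumrB !sum_delta //=; lra.
  move=> /List.in_map_iff [j [<- _]].
  exists (fun _ => 0); split.
  - by move=> i; rewrite big1.
  - by [].
  - move=> j'; rewrite /rowlam /= rowc_rank big1 ?opprK; last by move=> *; rewrite mulr0.
    by case: (j' == j).
  - by rewrite /rowlam /= big1 // => *; rewrite mulr0.
exists (fun x => c1 * z1 x + c2 * z2 x); split.
- by move=> i; rewrite sum_lin1 A1 A2 !mulr0 addr0.
- by move=> a ha; apply: addr_ge0; apply: mulr_ge0 => //; [apply: B1|apply: B2].
- move=> j; rewrite sum_lin /comb /=; have := C1 j; have := C2 j; nra.
- rewrite sum_lin /comb /=; have := D1; have := D2; nra.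
Qed.

Lemma dir2 : LP_optimal d tau g u -> implementable d tau g u.
Proof.
move=> [_ Hopt]; have [hu0 hu1] := hu.
case: (Classical_Prop.classic (exists lam, forall r, List.In r rs -> lhs #|J| r lam <= r.2)).
  move=> [lam Hlam]; exists (fun j => lam (enum_rank j)); split.
    move=> j; have h : lhs #|J| (rowlam j) lam <= (rowlam j).2.
      by apply: Hlam; apply/List.in_app_iff; right; apply/List.in_map_iff; exists j; split=> //; apply: memIn; rewrite mem_enum.
    move: h; rewrite /rowlam lhs_rowc (bigD1 j) //= eqxx big1 ?addr0.
      by rewrite mulr1n mulN1r; lra.
    by move=> j' /negbTE ->; rewrite mulr0n oppr0 mul0r.
  split=> // a b hab ha.
  have H : lhs #|J| (rowab a b) lam <= (rowab a b).2.
    apply: Hlam; apply/List.in_app_iff; left; apply/List.in_flat_map; exists a; split.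
      by apply/List.filter_In; split=> //; apply: memIn; rewrite mem_enum.
    apply/List.in_map_iff; exists b; split=> //.
    by apply/List.filter_In; rewrite hab eqxx; split=> //; apply: memIn; rewrite mem_enum.
  move: H; rewrite /rowab lhs_rowc /= => H; rewrite /cost.
  have e : \sum_j (g u a j - g u b j) * lam (enum_rank j) =
    \sum_j lam (enum_rank j) * g u a j - \sum_j lam (enum_rank j) * g u b j.
    by rewrite -sumrB; apply: eq_bigr => j _; rewrite mulrBl !(mulrC (lam _)).
  lra.
move=> Hno.
have HF : forall lam, exists2 r, List.In r rs & r.2 < lhs #|J| r lam.
  move=> lam; apply: Classical_Prop.NNPP => H; apply: Hno; exists lam => r Hr.
  by rewrite leNgt; apply/negP => hlt; apply: H; exists r.
have [r [Hr1 [Hr2 Hr3]]] := FM #|J| rs HF.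
have [z [A B C D]] := inv _ Hr1.
have Cz : forall j, \sum_a g u a j * z a <= 0.
  by move=> j; have := C j; rewrite Hr2 ?oppr0.
have [e [he He]] := eps_ex _ _ hu0 B (enum P).
have Hx : LP_feasible d g u (fun a => u a + e * z a).
  split; first split.
  - move=> a; apply: He; first by apply: memIn; rewrite mem_enum.
    by rewrite he lexx.
  - by move=> i; rewrite big_split /= -mulr_sumr A mulr0 addr0 hu1.
  - move=> j; rewrite /Gext; under eq_bigr do rewrite mulrDr; rewrite big_split /=.
    have -> : \sum_a g u a j * (e * z a) = e * \sum_a g u a j * z a.
      by rewrite mulr_sumr; apply: eq_bigr => a _; rewrite mulrCA.
    have := Cz j; have := he; nra.
have := Hopt _ Hx; rewrite /LP_objective.
under [X in _ <= X]eq_bigr do rewrite mulrDr; rewrite big_split /=.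
have -> : \sum_a tau u a * (e * z a) = e * \sum_a tau u a * z a.
  by rewrite mulr_sumr; apply: eq_bigr => a _; rewrite mulrCA.
have := D; have := he; nra.
Qed.

End Dir2.
End Main.

Theorem theorem3p2 (R : realType) (V : finType) (E : rel V) (I : finType)
  (s t : I -> V) (d : I -> R) (hd : forall i, 0 < d i) (J : finType)
  (tau : (Pidx E s t -> R) -> Pidx E s t -> R)
  (g : (Pidx E s t -> R) -> Pidx E s t -> J -> R)
  (hg : forall x, feasible d x -> forall a j, 0 <= g x a j)
  (u : Pidx E s t -> R) (hu : feasible d u) :
  implementable d tau g u <-> LP_optimal d tau g u.
Proof.
split; [exact: dir1 | exact: dir2].
Qed.
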